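(* Let $(\pi_k)_{k=0}^K$ be deterministic policies on an MDP as in the context. Define $q^{\pi'_0} := q^{\pi_0}$, $v^{\pi'_k} := \pi_k q^{\pi'_k}$, and $q^{\pi'_k} := r + \gamma P v^{\pi'_{k-1}}$ for $k\in\{1,\dots,K\}$. Define $\sigma_0^2 := P(v^{\pi_0})^2 - (Pv^{\pi_0})^2$ and, for $k\in\{1,\dots,K\}$, $\sigma_k^2 := P(v^{\pi'_{k-1}})^2 - (Pv^{\pi'_{k-1}})^2$ (squares componentwise), with $\sigma_k := \sqrt{\sigma_k^2}$. Then for every $k\in\{1,\dots,K\}$, $$\sum_{j=0}^{k-1}\gamma^{j+1}P_{k-j}^{k-1}\sigma_{k-j}\leq\sqrt{2H^3}\,\mathbf{1}.$$
   Context: MDP: finite state set $\mathcal{X}$, finite action set $\mathcal{A}$, discount $\gamma\in[0,1)$, reward $r\in[-1,1]^{\mathcal{X}\times\mathcal{A}}$, transition kernel $P(y|x,a)$, $H=1/(1-\gamma)$. $P$ is the matrix in $\mathbb{R}^{(\mathcal{X}\times\mathcal{A})\times\mathcal{X}}$ with $(Pv)(x,a)=\sum_yP(y|x,a)v(y)$; a policy $\pi$ is the matrix in $\mathbb{R}^{\mathcal{X}\times(\mathcal{X}\times\mathcal{A})}$ with $(\pi q)(x) = \sum_a\pi(a|x)q(x,a)$; $P^\pi := P\pi$; $q^\pi$ is the unique fixed point of $q\mapsto r+\gamma P^\pi q$ and $v^\pi=\pi q^\pi$. For $i\ge j$, $P_j^i := P^{\pi_i}P^{\pi_{i-1}}\cdots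 P^{\pi_j}$, and $P_j^i:=I$ if $i<j$. $\mathbf 1$ is the all-ones vector; inequality is componentwise. *)

(* Defs.v *)
From HB Require Import structures.
From mathcomp Require Import all_boot all_order all_algebra.
From mathcomp Require Import reals.
Set Implicit Arguments. Unset Strict Implicit. Unset Printing Implicit Defensive.
Import Order.TTheory GRing.Theory Num.Theory.
Local Open Scope ring_scope.

Section MDP.
Variables (R : realType) (X A : finType).

(* q-functions are maps X*A -> R, value functions maps X -> R.
   The transition kernel P(y|x,a) is  P : X * A -> X -> R. *)

Definition Pv (P : X * A -> X -> R) (v : X -> R) : X * A -> R :=
  fun xa => \sum_(y : X) P xa y * v y.

Definition det_policy (d : X -> A) : X -> A -> R :=
  fun x a => (a == d x)%:R.

Definition pol_apply (pi : X -> A -> R) (q : X * A -> R) : X -> R :=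
  fun x => \sum_(a : A) pi x a * q (x, a).

Definition Ppi (P : X * A -> X -> R) (pi : X -> A -> R) (q : X * A -> R)
  : X * A -> R := Pv P (pol_apply pi q).

Fixpoint chain (P : X * A -> X -> R) (pis : nat -> X -> A) (j n : nat)
  (q : X * A -> R) : X * A -> R :=
  match n with
  | 0 => q
  | n'.+1 => Ppi P (det_policy (pis (j + n')%N)) (chain P pis j n' q)
  end.

(* P_j^i q = P^{pi_i} P^{pi_{i-1}} ... P^{pi_j} q, and = q if i < j *)
Definition Pji (P : X * A -> X -> R) (pis : nat -> X -> A) (j i : nat)
  (q : X * A -> R) : X * A -> R := chain P pis j (i.+1 - j) q.

Fixpoint qprime (P : X * A -> X -> R) (r : X * A -> R) (gamma : R)
  (pis : nat -> X -> A) (q0 : X * A -> R) (k : nat) : X * A -> R :=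
  match k with
  | 0 => q0
  | k'.+1 => fun xa => r xa + gamma *
       Pv P (pol_apply (det_policy (pis k')) (qprime P r gamma pis q0 k')) xa
  end.

Definition vprime P r gamma pis q0 k : X -> R :=
  pol_apply (det_policy (pis k)) (qprime P r gamma pis q0 k).

(* sigma_k^2 = P (v^{pi'_{k-1}})^2 - (P v^{pi'_{k-1}})^2 for k >= 1;
   sigma_0^2 = P (v^{pi_0})^2 - (P v^{pi_0})^2 with v^{pi_0} = pi_0 q^{pi_0}
   (which equals v^{pi'_0}); so the same formula with index k.-1 covers both. *)
Definition sigma2 P r gamma pis q0 (k : nat) : X * A -> R :=
  let v := vprime P r gamma pis q0 k.-1 in
  fun xa => Pv P (fun y => v y ^+ 2) xa - (Pv P v xa) ^+ 2.

Definition sigma P r gamma pis q0 (k : nat) : X * A -> R :=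
  fun xa => Num.sqrt (sigma2 P r gamma pis q0 k xa).

End MDP.
Arguments det_policy {R X A} d x a.
Arguments chain {R X A} P pis j n q.
Arguments Pji {R X A} P pis j i q.
Arguments sigma {R X A} P r gamma pis q0 k xa.

(* Main.v *)
Require Import Defs.
From HB Require Import structures.
From mathcomp Require Import all_boot all_order all_algebra.
From mathcomp Require Import reals ring lra.
Import Order.TTheory GRing.Theory Num.Theory.
Local Open Scope ring_scope.

Section Gen.
Variable R : realType.

Lemma jensenW (I : finType) (w x : I -> R) :
  (forall i, 0 <= w i) -> 0 < \sum_i w i ->
  (\sum_i w i * x i) ^+ 2 <= (\sum_i w i) * \sum_i w i * x i ^+ 2.
Proof.
move=> w0 W0.
set W := \sum_i w i; set M := \sum_i w i * x i; set S := \sum_i w i * x i ^+ 2.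
have h : 0 <= \sum_i w i * (W * x i - M) ^+ 2.
  by apply: sumr_ge0 => i _; apply: mulr_ge0 => //; apply: sqr_ge0.
have e : \sum_i w i * (W * x i - M) ^+ 2 = W ^+ 2 * S - (2 * W * M) * M + M ^+ 2 * W.
  transitivity (\sum_i (W ^+ 2 * (w i * x i ^+ 2) - (2 * W * M) * (w i * x i) + M ^+ 2 * w i)).
    by apply: eq_bigr => i _; ring.
  by rewrite big_split sumrB /= -!mulr_sumr.
rewrite e in h.
have : 0 <= W * (W * S - M ^+ 2) by nra.
rewrite pmulr_rge0 //; lra.
Qed.

Lemma jensen1 (I : finType) (w x : I -> R) :
  (forall i, 0 <= w i) -> \sum_i w i = 1 ->
  (\sum_i w i * x i) ^+ 2 <= \sum_i w i * x i ^+ 2.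
Proof.
move=> w0 W1; have := @jensenW I w x w0; rewrite W1 mul1r; apply; lra.
Qed.

Lemma stoch_abs (I : finType) (w x : I -> R) (B : R) :
  (forall i, 0 <= w i) -> \sum_i w i = 1 -> (forall i, `|x i| <= B) ->
  `|\sum_i w i * x i| <= B.
Proof.
move=> w0 W1 xB; apply: le_trans (ler_norm_sum _ _ _) _.
apply: le_trans (_ : \sum_i w i * B <= B).
  apply: ler_sum => i _; rewrite normrM ger0_norm //; exact: ler_wpM2l.
by rewrite -mulr_suml W1 mul1r.
Qed.

Lemma stoch_ineq (I : finType) (w f g h : I -> R) (a c : R) :
  (forall i, 0 <= w i) -> \sum_i w i = 1 ->
  (forall i, a * f i <= a * g i - h i + c) ->
  a * (\sum_i w i * f i) <= a * (\sum_i w i * g i) - (\sum_i w i * h i) + c.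
Proof.
move=> w0 W1 H.
have -> : a * (\sum_i w i * g i) - (\sum_i w i * h i) + c
  = \sum_i w i * (a * g i - h i + c).
  transitivity (\sum_i (a * (w i * g i) - w i * h i + c * w i)).
    by rewrite big_split sumrB /= -!mulr_sumr W1 mulr1.
  by apply: eq_bigr => i _; ring.
rewrite mulr_sumr; apply: ler_sum => i _.
rewrite mulrCA; exact: ler_wpM2l.
Qed.
Lemma seq_bound (g H : R) (k : nat) (c d t : nat -> R) :
 0 <= g -> g < 1 -> H = 1 / (1 - g) -> (forall j, 0 <= c j) -> (forall j, 0 <= d j) ->
 d k <= H ^+ 2 ->
 (forall j, (j < k)%N -> g ^+ 2 * c j <= g ^+ 2 * d j.+1 - d j + 2 * H) ->
 (forall j, (j < k)%N -> t j <= Num.sqrt (c j)) ->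
 \sum_(j < k) g ^+ j.+1 * t j <= Num.sqrt (2 * H ^+ 3).
Proof.
move=> g0 g1 HE c0 d0 dk rec tc.
have HE1 : H * (1 - g) = 1 by rewrite HE mulrC mulrA mulr1 divff //; lra.
have Hp : 0 < H by nra.
have EE : forall n, \sum_(j < n) g ^+ j = (1 - g ^+ n) * H.
  move=> n; have s := subrX1 g n.
  have -> : 1 - g ^+ n = (1 - g) * \sum_(j < n) g ^+ j by rewrite -opprB s -mulNr opprB.
  by rewrite mulrC mulrA HE1 mul1r.
have gn0 : forall n, 0 <= g ^+ n by move=> n; exact: exprn_ge0.
have gn1 : forall n, g ^+ n <= 1 by move=> n; apply: exprn_ile1; lra.
have SA : forall n, (n <= k)%N ->
  \sum_(j < n) g ^+ j * (g ^+ 2 * c j) <= g ^+ n * d n - d 0%N + 2 * H * \sum_(j < n) g ^+ j.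
  elim=> [|n IH] nk; first by rewrite !big_ord0 expr0; lra.
  rewrite !big_ord_recr /=.
  have IH' := IH (ltnW nk).
  have h := rec n nk.
  have h1 := ler_wpM2l (gn0 n) h.
  have h2 : 0 <= g ^+ n * d n.+1 * g * (1 - g).
    by apply: mulr_ge0; [apply: mulr_ge0; [apply: mulr_ge0|]|lra].
  rewrite [g ^+ n.+1]exprS; nra.
have SAk := SA k (leqnn k).
rewrite EE in SAk.
have gk := gn0 k; have gk1 := gn1 k.
have Sk : \sum_(j < k) g ^+ j * (g ^+ 2 * c j) <= 2 * H ^+ 2.
  have : g ^+ k * d k <= g ^+ k * H ^+ 2 by exact: ler_wpM2l.
  have := d0 0%N; nra.
have Sk0 : 0 <= \sum_(j < k) g ^+ j * (g ^+ 2 * c j).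
  by apply: sumr_ge0 => j _; apply: mulr_ge0 => //; apply: mulr_ge0; [apply: sqr_ge0|].
clear SA SAk; case: k dk rec tc gk gk1 Sk Sk0 => [|k] dk rec tc gk gk1 Sk Sk0.
  by rewrite big_ord0 sqrtr_ge0.
set Z := \sum_(j < k.+1) g ^+ j.+1 * Num.sqrt (c j).
have LZ : \sum_(j < k.+1) g ^+ j.+1 * t j <= Z.
  by apply: ler_sum => j _; apply: ler_wpM2l => //; apply: tc.
apply: le_trans LZ _.
apply: le_trans (ler_norm Z) _.
rewrite -sqrtr_sqr ler_sqrt; last first.
  by apply: mulr_ge0; [lra | apply: exprn_ge0; lra].
have EW : 0 < \sum_(j < k.+1) g ^+ j.
  rewrite EE; apply: mulr_gt0 => //.
  have : g ^+ k.+1 < 1 by rewrite exprn_ilt1.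
  lra.
have J := @jensenW _ (fun j : 'I_k.+1 => g ^+ j) (fun j => g * Num.sqrt (c j)) (fun j => gn0 j) EW.
have ZE : Z = \sum_(j < k.+1) g ^+ j * (g * Num.sqrt (c j)).
  by apply: eq_bigr => j _; rewrite exprS mulrA [g ^+ j * g]mulrC.
have SE : \sum_(j < k.+1) g ^+ j * (g * Num.sqrt (c j)) ^+ 2
        = \sum_(j < k.+1) g ^+ j * (g ^+ 2 * c j).
  by apply: eq_bigr => j _; rewrite exprMn sqr_sqrtr.
rewrite -ZE SE EE in J.
have : (1 - g ^+ k.+1) * H <= H by nra.
nra.
Qed.
End Gen.
Section M.
Variables (R : realType) (X A : finType) (P : X * A -> X -> R) (pis : nat -> X -> A).
Hypothesis P0 : forall xa y, 0 <= P xa y.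
Hypothesis P1 : forall xa, \sum_(y : X) P xa y = 1.

Lemma pol_det (d : X -> A) (q : X * A -> R) y :
  pol_apply (det_policy d) q y = q (y, d y).
Proof.
rewrite /pol_apply (bigD1 (d y)) //= /det_policy eqxx mul1r big1 ?addr0 //.
by move=> a /negbTE ->; rewrite mul0r.
Qed.

Lemma Ppi_E (d : X -> A) (f : X * A -> R) z :
  Ppi P (det_policy d) f z = \sum_y P z y * f (y, d y).
Proof. by rewrite /Ppi /Pv; apply: eq_bigr => y _; rewrite pol_det. Qed.

Lemma chain_ker j n : exists w : X * A -> X * A -> R,
  [/\ forall z u, 0 <= w z u, forall z, \sum_u w z u = 1 &
      forall f z, chain P pis j n f z = \sum_u w z u * f u].
Proof.
elim: n => [|n [w [w0 w1 wE]]].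
  exists (fun z u => (u == z)%:R); split.
  - by move=> z u; rewrite ler0n.
  - by move=> z; rewrite (bigD1 z) //= eqxx big1 ?addr0 // => u /negbTE ->.
  move=> f z /=; rewrite (bigD1 z) //= eqxx mul1r big1 ?addr0 //.
  by move=> u /negbTE ->; rewrite mul0r.
exists (fun z u => \sum_y P z y * w (y, pis (j + n)%N y) u); split.
- by move=> z u; apply: sumr_ge0 => y _; apply: mulr_ge0.
- move=> z; rewrite exchange_big /= -(P1 z); apply: eq_bigr => y _.
  by rewrite -mulr_sumr w1 mulr1.
move=> f z /=; rewrite Ppi_E.
transitivity (\sum_y \sum_u P z y * (w (y, pis (j + n)%N y) u * f u)).
  by apply: eq_bigr => y _; rewrite wE mulr_sumr.
rewrite exchange_big /=; apply: eq_bigr => u _; rewrite mulr_suml.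
by apply: eq_bigr => y _; rewrite mulrA.
Qed.

Lemma chain_ext j n (f g : X * A -> R) : f =1 g -> chain P pis j n f =1 chain P pis j n g.
Proof.
move=> fg z; have [w [_ _ wE]] := chain_ker j n; rewrite !wE.
by apply: eq_bigr => u _; rewrite fg.
Qed.

Lemma chain_peel j n f :
  chain P pis j n.+1 f = chain P pis j.+1 n (Ppi P (det_policy (pis j)) f).
Proof.
elim: n => [|n IH]; first by rewrite /= addn0.
change (Ppi P (det_policy (pis (j + n.+1)%N)) (chain P pis j n.+1 f) =
  Ppi P (det_policy (pis (j.+1 + n)%N)) (chain P pis j.+1 n (Ppi P (det_policy (pis j)) f))).
by rewrite IH addnS addSn.
Qed.
End M.

Theorem lemma22 (R : realType) (X A : finType)
  (gamma : R) (r : X * A -> R) (P : X * A -> X -> R)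
  (pis : nat -> X -> A) (K : nat) (q0 : X * A -> R) :
  0 <= gamma -> gamma < 1 ->
  (forall xa, `|r xa| <= 1) ->
  (forall xa y, 0 <= P xa y) ->
  (forall xa, \sum_(y : X) P xa y = 1) ->
  (* q0 = q^{pi_0}, the (unique) fixed point of q |-> r + gamma P^{pi_0} q *)
  (forall xa, q0 xa = r xa + gamma * Ppi P (det_policy (pis 0%N)) q0 xa) ->
  forall k : nat, (1 <= k <= K)%N ->
  forall xa : X * A,
    \sum_(j < k) gamma ^+ j.+1 *
        Pji P pis (k - j)%N k.-1 (sigma P r gamma pis q0 (k - j)%N) xa
    <= Num.sqrt (2 * (1 / (1 - gamma)) ^+ 3).
Proof.
move=> g0 g1 rB P0 P1 q0fix k /andP[k1 _] xa.
set H := 1 / (1 - gamma).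
have HE1 : H * (1 - gamma) = 1 by rewrite /H mulrC mulrA mulr1 divff //; lra.
have Hp : 0 < H by nra.
pose q := qprime P r gamma pis q0.
pose M := \big[Order.max/0]_z `|q0 z|.
have qM : forall z, `|q0 z| <= M by move=> z; exact: le_bigmax.
have M0 : 0 <= M := le_trans (normr_ge0 _) (qM xa).
have MM : M <= 1 + gamma * M.
  apply: bigmax_le => [|z _]; first by nra.
  rewrite q0fix Ppi_E.
  apply: le_trans (ler_normD _ _) _; rewrite normrM (ger0_norm g0).
  have := rB z.
  have := @stoch_abs R X (P z) (fun y => q0 (y, pis 0%N y)) M (P0 z) (P1 z) (fun y => qM _).
  nra.
have MH : M <= H by nra.
have qb : forall m z, `|q m z| <= H.
  elim=> [|m IH] z; first by apply: le_trans (qM z) MH.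
  rewrite /q /=.
  apply: le_trans (ler_normD _ _) _; rewrite normrM (ger0_norm g0).
  have := rB z.
  have := @stoch_abs R X (P z) (fun y => pol_apply (det_policy (pis m)) (q m) y) H
    (P0 z) (P1 z) (fun y => ltac:(rewrite /= pol_det; exact: IH)).
  rewrite /Pv /q; nra.
have s20 : forall m z, 0 <= sigma2 P r gamma pis q0 m z.
  move=> m z; rewrite /sigma2 /Pv subr_ge0; exact: jensen1.
pose c := fun j => chain P pis (k - j) (k - (k - j)) (sigma2 P r gamma pis q0 (k - j)) xa.
pose d := fun j => chain P pis (k - j) (k - (k - j)) (fun z => q (k - j)%N z ^+ 2) xa.
pose t := fun j => chain P pis (k - j) (k - (k - j)) (sigma P r gamma pis q0 (k - j)) xa.
have -> : \sum_(j < k) gamma ^+ j.+1 *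
        Pji P pis (k - j)%N k.-1 (sigma P r gamma pis q0 (k - j)%N) xa
   = \sum_(j < k) gamma ^+ j.+1 * t j.
  by apply: eq_bigr => j _; rewrite /Pji prednK.
apply: (@seq_bound R gamma H k c d t) => //.
- move=> j; have [w [w0 w1 wE]] := @chain_ker R X A P pis P0 P1 (k - j) (k - (k - j)).
  rewrite /c wE; apply: sumr_ge0 => u _; exact: mulr_ge0.
- move=> j; have [w [w0 w1 wE]] := @chain_ker R X A P pis P0 P1 (k - j) (k - (k - j)).
  rewrite /d wE; apply: sumr_ge0 => u _; apply: mulr_ge0 => //; exact: sqr_ge0.
- have [w [w0 w1 wE]] := @chain_ker R X A P pis P0 P1 0 k.
  rewrite /d subnn subn0 wE.
  apply: le_trans (_ : \sum_u w xa u * H ^+ 2 <= _); last by rewrite -mulr_suml w1 mul1r.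
  apply: ler_sum => u _; apply: ler_wpM2l => //.
  have := qb 0%N u; rewrite ler_norml => /andP[h1 h2]; nra.
- move=> j jk.
  set m := (k - j)%N.
  have m1 : (0 < m)%N by rewrite /m subn_gt0.
  set m' := m.-1.
  have mE : m = m'.+1 by rewrite /m' prednK.
  have e1 : (k - j.+1)%N = m' by rewrite /m' /m subnS.
  rewrite /c /d e1 -/m.
  have e2 : (k - m')%N = (k - m).+1 by rewrite mE subnSK // -mE /m leq_subr.
  rewrite e2 chain_peel -mE.
  have [w [w0 w1 wE]] := @chain_ker R X A P pis P0 P1 m (k - m).
  rewrite !wE.
  apply: stoch_ineq => // z.
  rewrite /sigma2 -/m' /vprime /Pv.
  have -> : \sum_y P z y * pol_apply (det_policy (pis m')) (qprime P r gamma pis q0 m') y ^+ 2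
     = Ppi P (det_policy (pis m')) (fun z0 => q m' z0 ^+ 2) z.
    by rewrite Ppi_E; apply: eq_bigr => y _; rewrite pol_det.
  have qE : q m z = r z + gamma * \sum_y P z y * pol_apply (det_policy (pis m')) (qprime P r gamma pis q0 m') y.
    by rewrite mE.
  rewrite qE.
  have := qb m z; rewrite qE ler_norml => /andP[h1 h2].
  have := rB z; rewrite ler_norml => /andP[h3 h4].
  nra.
- move=> j jk.
  have [w [w0 w1 wE]] := @chain_ker R X A P pis P0 P1 (k - j) (k - (k - j)).
  rewrite /t /c !wE.
  apply: le_trans (ler_norm _) _.
  rewrite -sqrtr_sqr ler_sqrt; last by apply: sumr_ge0 => u _; exact: mulr_ge0.
  have -> : \sum_u w xa u * sigma2 P r gamma pis q0 (k - j) u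
     = \sum_u w xa u * sigma P r gamma pis q0 (k - j) u ^+ 2.
    by apply: eq_bigr => u _; rewrite /sigma sqr_sqrtr.
  exact: jensen1.
Qed.
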